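(* Assume $C(u,v)\equiv C>0$ for $u,v\in\{x,y\}$, $\beta=0$ and $\mu=1$. Then the system $\dot n^x=P(n^x,n^y)$, $\dot n^y=Q(n^x,n^y)$ has no fixed point in $(0,\infty)^2$, and for every initial condition in $(0,\infty)^2$ the solution converges to $(0,r(y)/C)$ if $S(y;x)>0$ and to $(r(x)/C,0)$ if $S(y;x)<0$, where here $S(y;x)=r(y)-r(x)+\alpha(y,x)=-S(x;y)$.
   Context: Let $r(x),r(y)>0$, $\alpha(u,v)=\tau(u,v)-\tau(v,u)$ with $\tau\ge0$, and $$P(u,v)=\Big(r(x)-Cu-Cv+\frac{\alpha(x,y)}{u+v}v\Big)u,\qquad Q(u,v)=\Big(r(y)-Cu-Cv-\frac{\alpha(x,y)}{u+v}u\Big)v.$$ In general the invasion fitness is $S(y;x)=r(y)-\frac{C(y,x)r(x)}{C(x,x)}+\frac{\alpha(y,x)r(x)}{\beta C(x,x)+\mu r(x)}$, which reduces to $r(y)-r(x)+\alpha(y,x)$ in this case. *)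

(* Defs.v *)
From Stdlib Require Import Reals.
Open Scope R_scope.

(* alpha(u,v) = tau(u,v) - tau(v,u); txy = tau(x,y), tyx = tau(y,x). *)
Definition alpha (t_uv t_vu : R) : R := t_uv - t_vu.

(* Vector field with C(u,v) = C constant; a = alpha(x,y). *)
Definition Pf (rx C a : R) (u v : R) : R := (rx - C*u - C*v + a / (u + v) * v) * u.
Definition Qf (ry C a : R) (u v : R) : R := (ry - C*u - C*v - a / (u + v) * u) * v.

Definition S_gen (ry rx Cyx Cxx ayx beta mu : R) : R :=
  ry - Cyx * rx / Cxx + ayx * rx / (beta * Cxx + mu * rx).

Definition is_solution (F G : R -> R -> R) (nx ny : R -> R) : Prop :=
  (forall t, 0 < t ->
     derivable_pt_lim nx t (F (nx t) (ny t)) /\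
     derivable_pt_lim ny t (G (nx t) (ny t))) /\
  (forall eps, 0 < eps -> exists delta, 0 < delta /\
     forall t, 0 <= t < delta ->
       Rabs (nx t - nx 0) < eps /\ Rabs (ny t - ny 0) < eps).

Definition conv_infty (f : R -> R) (l : R) : Prop :=
  forall eps, 0 < eps -> exists T, forall t, T <= t -> Rabs (f t - l) < eps.

(* Main.v *)
Require Import Defs.
From Stdlib Require Import Reals Lra Classical.
From Coquelicot Require Import Coquelicot.
Open Scope R_scope.

Lemma antideriv (f : R -> R) : (forall t, continuous f t) ->
  exists F : R -> R, forall t, is_derive F t (f t).
Proof.
  intros Hc. exists (RInt f 0). intros t.
  apply is_derive_RInt with (a:=0).
  - apply filter_forall. intros b. apply (@RInt_correct R_CompleteNormedModule).
    apply ex_RInt_continuous. intros z _. apply Hc.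
  - apply Hc.
Qed.

Lemma dcont (f : R -> R) t l : derivable_pt_lim f t l -> continuity_pt f t.
Proof. intros H. apply derivable_continuous_pt. exists l. exact H. Qed.

Lemma cont_eps (g : R -> R) x : continuity_pt g x ->
  forall e, 0 < e -> exists d, 0 < d /\ forall y, Rabs (y - x) < d -> Rabs (g y - g x) < e.
Proof.
  intros H e He. destruct (proj1 (continuity_pt_locally g x) H (mkposreal e He)) as [d Hd].
  exists d. split. apply cond_pos. intros y Hy. apply Hd. exact Hy.
Qed.

Lemma last_le (g : R -> R) a b : a < b -> (forall x, a <= x <= b -> continuity_pt g x) ->
  g a <= 0 -> 0 < g b ->
  exists s, a <= s < b /\ g s <= 0 /\ forall r, s < r <= b -> 0 < g r.
Proof.
  intros Hab Hc Ha Hb.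
  set (E := fun x => a <= x <= b /\ g x <= 0).
  assert (HB : bound E) by (exists b; intros x [Hx _]; lra).
  assert (HE : exists x, E x) by (exists a; split; [lra|exact Ha]).
  destruct (completeness E HB HE) as [s [Hub Hlub]].
  assert (Has : a <= s) by (apply Hub; split; [lra|exact Ha]).
  assert (Hsb : s <= b) by (apply Hlub; intros x [Hx _]; lra).
  assert (Hgs : g s <= 0).
  { destruct (Rle_or_lt (g s) 0) as [h|h]; [exact h|exfalso].
    destruct (cont_eps g s (Hc s (conj Has Hsb)) (g s) h) as [d [Hd Hy]].
    assert (Hex : exists x, E x /\ s - d < x).
    { apply NNPP. intros Hn. assert (s <= s - d). apply Hlub. intros x Hx.
      destruct (Rle_or_lt x (s - d)) as [h1|h1]; [exact h1|]. exfalso; apply Hn; eauto. lra. }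
    destruct Hex as [x [[Hx1 Hx2] Hx3]].
    assert (x <= s) by (apply Hub; split; assumption).
    specialize (Hy x ltac:(rewrite Rabs_left1; lra)).
    apply Rabs_def2 in Hy. lra. }
  exists s. split; [split; [exact Has|]|split; [exact Hgs|]].
  - destruct (Rle_lt_or_eq_dec s b Hsb) as [h|h]; [exact h|subst; lra].
  - intros r [Hr1 Hr2]. destruct (Rle_or_lt (g r) 0) as [h|h]; [|exact h].
    assert (r <= s) by (apply Hub; split; [lra|exact h]). lra.
Qed.

Lemma attract (f df : R -> R) (T lam c : R) : 0 < c ->
  (forall t, T <= t -> derivable_pt_lim f t (df t)) ->
  (forall t, T <= t -> lam < f t -> df t <= - c) ->
  exists T', forall t, T' <= t -> f t <= lam.
Proof.
  intros Hc Hd Hs.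
  assert (H1 : exists t1, T <= t1 /\ f t1 <= lam).
  { apply NNPP. intros Hn.
    assert (Hall : forall t, T <= t -> lam < f t).
    { intros t Ht. destruct (Rle_or_lt (f t) lam) as [h|h]; [exfalso; apply Hn; eauto|exact h]. }
    set (t := T + Rabs (f T - lam) / c + 1).
    assert (HT : T < t). { unfold t. assert (0 <= Rabs (f T - lam)/c).
      apply Rdiv_le_0_compat; [apply Rabs_pos|lra]. lra. }
    destruct (MVT_cor2 f df T t HT (fun x hx => Hd x (proj1 hx))) as [x [Hx1 Hx2]].
    assert (df x <= - c) by (apply Hs; [lra|apply Hall; lra]).
    assert (Hft := Hall t (Rlt_le _ _ HT)).
    assert (f t - f T <= - c * (t - T)) by nra.
    assert (c * (t - T) = Rabs (f T - lam) + c) by (unfold t; field; lra).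
    pose proof (Rle_abs (f T - lam)). nra. }
  destruct H1 as [t1 [Ht1 Hf1]]. exists t1. intros t Ht.
  destruct (Rle_or_lt (f t) lam) as [h|h]; [exact h|exfalso].
  destruct (Rle_lt_or_eq_dec t1 t Ht) as [Hlt|Heq]; [|subst; lra].
  destruct (last_le (fun x => f x - lam) t1 t Hlt) as [s [[Hs1 Hs2] [Hs3 Hs4]]].
  - intros x Hx. apply continuity_pt_minus. apply (dcont _ _ _ (Hd x ltac:(lra))).
    apply continuity_pt_const. intros u v; reflexivity.
  - lra.
  - lra.
  - destruct (MVT_cor2 f df s t Hs2 (fun x hx => Hd x ltac:(lra))) as [x [Hx1 Hx2]].
    assert (df x <= - c) by (apply Hs; [lra|]; specialize (Hs4 x ltac:(lra)); lra).
    nra.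
Qed.

Lemma dexpK K x : derivable_pt_lim (fun x => exp (K * x)) x (exp (K * x) * K).
Proof.
  apply is_derive_Reals. auto_derive; auto. ring.
Qed.

Lemma grow (u du : R -> R) (K a b : R) : a < b ->
  (forall x, a <= x <= b -> derivable_pt_lim u x (du x)) ->
  (forall x, a < x < b -> 0 <= du x + K * u x) -> 0 < u a -> 0 < u b.
Proof.
  intros Hab Hd Hs Ha.
  set (phi := fun x => u x * exp (K * x)).
  assert (Hphi : forall x, a <= x <= b -> derivable_pt_lim phi x (du x * exp (K*x) + u x * (exp (K * x) * K))).
  { intros x Hx. apply (derivable_pt_lim_mult u (fun x => exp (K*x))). apply Hd; auto. apply dexpK. }
  destruct (MVT_cor2 phi _ a b Hab Hphi) as [c [Hc1 Hc2]].
  assert (0 <= du c * exp (K*c) + u c * (exp (K * c) * K)).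
  { specialize (Hs c Hc2). pose proof (exp_pos (K*c)). nra. }
  assert (0 < phi a) by (unfold phi; pose proof (exp_pos (K*a)); nra).
  assert (0 < phi b) by nra.
  unfold phi in *. pose proof (exp_pos (K*b)).
  destruct (Rle_or_lt (u b) 0); [nra|auto].
Qed.

Lemma frac_bound a u v : 0 < u -> 0 < v -> - Rabs a <= a / (u + v) * v <= Rabs a.
Proof.
  intros Hu Hv.
  assert (E : a / (u+v) * v = a * (v / (u+v))) by (field; lra).
  assert (0 < v/(u+v)) by (apply Rdiv_lt_0_compat; lra).
  assert (v/(u+v) < 1).
  { apply (Rmult_lt_reg_r (u+v)); [lra|]. unfold Rdiv; rewrite Rmult_assoc, Rinv_l; lra. }
  rewrite E. set (q := v/(u+v)) in *. clearbody q.
  unfold Rabs; destruct Rcase_abs; split.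
  - assert (a * (q - 1) >= 0) by nra. lra.
  - assert (a * q <= 0) by nra. lra.
  - assert (a * q >= 0) by (apply Rle_ge, Rmult_le_pos; lra). lra.
  - assert (a * (1 - q) >= 0) by (apply Rle_ge, Rmult_le_pos; lra). lra.
Qed.

Lemma pos_sol rx ry C a nx ny : 0 < rx -> 0 < ry -> 0 < C ->
  is_solution (Pf rx C a) (Qf ry C a) nx ny -> 0 < nx 0 -> 0 < ny 0 ->
  exists t0, 0 < t0 /\ forall t, t0 <= t -> 0 < nx t /\ 0 < ny t.
Proof.
  intros Hrx Hry HC [Hd Hc] H0x H0y.
  destruct (Hc (Rmin (nx 0) (ny 0)) ltac:(apply Rmin_glb_lt; auto)) as [d [Hdp Hdd]].
  set (t0 := d/2). exists t0. split. unfold t0; lra.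
  assert (Ht0 : 0 < nx t0 /\ 0 < ny t0).
  { destruct (Hdd t0 ltac:(unfold t0; lra)) as [h1 h2].
    pose proof (Rmin_l (nx 0) (ny 0)). pose proof (Rmin_r (nx 0) (ny 0)).
    apply Rabs_def2 in h1; apply Rabs_def2 in h2. lra. }
  assert (Hcx : forall x, 0 < x -> continuity_pt nx x) by (intros x hx; exact (dcont _ _ _ (proj1 (Hd x hx)))).
  assert (Hcy : forall x, 0 < x -> continuity_pt ny x) by (intros x hx; exact (dcont _ _ _ (proj2 (Hd x hx)))).
  intros t Ht. apply NNPP. intros Hn.
  set (g := fun x => (nx x + ny x - Rabs (nx x - ny x)) / 2).
  assert (Hg : forall x, 0 < g x <-> 0 < nx x /\ 0 < ny x).
  { intros x. unfold g. unfold Rabs; destruct Rcase_abs; split; intros; lra. }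
  assert (Hgt : g t <= 0).
  { destruct (Rle_or_lt (g t) 0) as [h|h]; [exact h|exfalso; apply Hn; apply Hg; exact h]. }
  assert (Htt : t0 < t).
  { destruct (Rle_lt_or_eq_dec t0 t Ht) as [h|h]; [exact h|subst; exfalso; apply Hn; exact Ht0]. }
  assert (Hcg : forall x, 0 < x -> continuity_pt g x).
  { intros x hx. unfold g. apply continuity_pt_mult.
    apply continuity_pt_minus. apply continuity_pt_plus; auto.
    apply (continuity_pt_comp (fun x => nx x - ny x) Rabs). apply continuity_pt_minus; auto.
    apply Rcontinuity_abs. apply continuity_pt_const. intros ? ?; reflexivity. }
  destruct (last_le (fun x => g (- x)) (- t) (- t0)) as [s' [[Hs1 Hs2] [Hs3 Hs4]]].
  - lra.
  - intros x Hx. apply (continuity_pt_comp Ropp g). apply continuity_pt_opp. apply continuity_pt_id.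
    apply Hcg. unfold t0 in *; lra.
  - rewrite Ropp_involutive; exact Hgt.
  - rewrite Ropp_involutive; apply Hg; exact Ht0.
  - set (s := - s') in *.
    assert (Hpos : forall y, t0 <= y < s -> 0 < nx y /\ 0 < ny y).
    { intros y Hy. apply Hg. specialize (Hs4 (- y) ltac:(unfold s in Hy; lra)).
      rewrite Ropp_involutive in Hs4; exact Hs4. }
    assert (Hts : t0 < s) by (unfold s; lra).
    destruct (continuity_ab_maj (fun x => nx x + ny x) t0 s ltac:(lra)) as [Mx [HM _]].
    { intros c Hcc. apply continuity_pt_plus; [apply Hcx|apply Hcy]; unfold t0 in *; lra. }
    set (B := nx Mx + ny Mx) in *.
    set (K := C * B + Rabs a).
    assert (Hsx : 0 < nx s).
    { apply (grow nx (fun x => Pf rx C a (nx x) (ny x)) K t0 s Hts).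
      - intros x Hx. apply Hd. unfold t0 in *; lra.
      - intros x Hx. destruct (Hpos x ltac:(lra)) as [p1 p2]. specialize (HM x ltac:(lra)). cbv beta in HM.
        assert (C*(nx x + ny x) <= C*B) by (apply Rmult_le_compat_l; lra).
        pose proof (frac_bound a (nx x) (ny x) p1 p2). unfold Pf, K.
        assert (0 <= rx - C * nx x - C * ny x + a / (nx x + ny x) * ny x + (C * B + Rabs a)) by nra.
        nra.
      - exact (proj1 Ht0). }
    assert (Hsy : 0 < ny s).
    { apply (grow ny (fun x => Qf ry C a (nx x) (ny x)) K t0 s Hts).
      - intros x Hx. apply Hd. unfold t0 in *; lra.
      - intros x Hx. destruct (Hpos x ltac:(lra)) as [p1 p2]. specialize (HM x ltac:(lra)). cbv beta in HM.
        assert (C*(nx x + ny x) <= C*B) by (apply Rmult_le_compat_l; lra).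
        pose proof (frac_bound a (ny x) (nx x) p2 p1).
        assert (a / (nx x + ny x) * nx x = a / (ny x + nx x) * nx x) by (rewrite Rplus_comm; auto).
        unfold Qf, K.
        assert (0 <= ry - C * nx x - C * ny x - a / (nx x + ny x) * nx x + (C * B + Rabs a)) by nra.
        nra.
      - exact (proj2 Ht0). }
    assert (0 < g s) by (apply Hg; auto).
    lra.
Qed.

Lemma dln (f : R -> R) t l : 0 < f t -> derivable_pt_lim f t l ->
  derivable_pt_lim (fun x => ln (f x)) t (l / f t).
Proof.
  intros Hp Hd. pose proof (derivable_pt_lim_comp f ln t l (/ f t) Hd (derivable_pt_lim_ln _ Hp)) as H.
  unfold comp in H. replace (l / f t) with (/ f t * l) by (unfold Rdiv; ring). exact H.
Qed.

Lemma dlim_ext (f : R -> R) t l l' : l = l' -> derivable_pt_lim f t l -> derivable_pt_lim f t l'.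
Proof. intros ->; auto. Qed.

Lemma core rx ry C a nx ny : 0 < rx -> 0 < ry -> 0 < C -> 0 < ry - rx - a ->
  is_solution (Pf rx C a) (Qf ry C a) nx ny -> 0 < nx 0 -> 0 < ny 0 ->
  conv_infty nx 0 /\ conv_infty ny (ry / C).
Proof.
  intros Hrx Hry HC HS Hsol H0x H0y.
  destruct (pos_sol rx ry C a nx ny Hrx Hry HC Hsol H0x H0y) as [t0 [Ht0 Hpos]].
  destruct Hsol as [Hd _].
  set (S := ry - rx - a) in *.
  set (lq := fun x => ln (nx x) - ln (ny x)).
  assert (Hlq : forall t, t0 <= t -> derivable_pt_lim lq t (- S)).
  { intros t Ht. destruct (Hpos t Ht) as [p1 p2]. destruct (Hd t ltac:(lra)) as [d1 d2].
    unfold lq. eapply dlim_ext; [|apply derivable_pt_lim_minus; apply dln; eauto].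
    unfold Pf, Qf, S. field. lra. }
  assert (Hlq2 : forall t, t0 <= t -> lq t = lq t0 - S * (t - t0)).
  { intros t Ht. destruct (Rle_lt_or_eq_dec t0 t Ht) as [h|h]; [|subst; ring].
    destruct (MVT_cor2 lq (fun _ => - S) t0 t h (fun c hc => Hlq c ltac:(lra))) as [c [Hc _]].
    lra. }
  assert (Hq : forall d, 0 < d -> exists T, t0 <= T /\ forall t, T <= t -> nx t <= d * ny t).
  { intros d Hdp. exists (t0 + Rabs (lq t0 - ln d) / S). split.
    { assert (0 <= Rabs (lq t0 - ln d) / S) by (apply Rdiv_le_0_compat; [apply Rabs_pos|lra]). lra. }
    intros t Ht. assert (Htt : t0 <= t).
    { assert (0 <= Rabs (lq t0 - ln d) / S) by (apply Rdiv_le_0_compat; [apply Rabs_pos|lra]). lra. }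
    destruct (Hpos t Htt) as [p1 p2].
    assert (lq t <= ln d).
    { rewrite (Hlq2 t Htt). pose proof (Rle_abs (lq t0 - ln d)).
      assert (S * (t - t0) >= Rabs (lq t0 - ln d)).
      { assert (Rabs (lq t0 - ln d) = S * (Rabs (lq t0 - ln d) / S)) by (field; lra).
        nra. }
      lra. }
    destruct (Rle_or_lt (nx t) (d * ny t)) as [h|h]; [exact h|exfalso].
    assert (ln (d * ny t) < ln (nx t)) by (apply ln_increasing; [nra|exact h]).
    rewrite ln_mult in H0 by lra. unfold lq in H. lra. }
  set (L := ry / C).
  assert (HL : 0 < L) by (unfold L; apply Rdiv_lt_0_compat; lra).
  assert (HCL : C * L = ry) by (unfold L; field; lra).
  set (lN := fun x => ln (nx x + ny x)).
  set (gg := fun x => (rx * nx x + ry * ny x) / (nx x + ny x)).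
  assert (HlN : forall t, t0 <= t -> derivable_pt_lim lN t (gg t - C * (nx t + ny t))).
  { intros t Ht. destruct (Hpos t Ht) as [p1 p2]. destruct (Hd t ltac:(lra)) as [d1 d2].
    unfold lN. eapply dlim_ext; [|apply dln; [lra|apply derivable_pt_lim_plus; eauto]].
    unfold Pf, Qf, gg. field. lra. }
  assert (Hgg : forall d t, 0 < d -> t0 <= t -> nx t <= d * ny t -> Rabs (gg t - ry) <= Rabs (rx - ry) * d).
  { intros d t Hdp Ht Hle. destruct (Hpos t Ht) as [p1 p2].
    assert (E : gg t - ry = (rx - ry) * (nx t / (nx t + ny t))) by (unfold gg; field; lra).
    rewrite E, Rabs_mult. apply Rmult_le_compat_l; [apply Rabs_pos|].
    assert (0 < nx t / (nx t + ny t)) by (apply Rdiv_lt_0_compat; lra).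
    rewrite Rabs_pos_eq by lra.
    apply (Rmult_le_reg_r (nx t + ny t)); [lra|]. unfold Rdiv. rewrite Rmult_assoc, Rinv_l by lra. nra. }
  assert (HN : forall e, 0 < e -> e < L -> exists T, forall t, T <= t -> L - e <= nx t + ny t <= L + e).
  { intros e He HeL.
    set (d := C * e / (2 * (Rabs (rx - ry) + 1))).
    assert (Hd0 : 0 < d) by (unfold d; apply Rdiv_lt_0_compat; [nra|pose proof (Rabs_pos (rx-ry)); lra]).
    assert (Hdd : Rabs (rx - ry) * d <= C * e / 2).
    { unfold d. pose proof (Rabs_pos (rx-ry)).
      assert (Rabs (rx - ry) * (C * e / (2 * (Rabs (rx - ry) + 1))) = (C*e/2) * (Rabs (rx - ry) / (Rabs (rx - ry) + 1))) by (field; lra).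
      rewrite H0. assert (Rabs (rx - ry) / (Rabs (rx - ry) + 1) <= 1).
      { apply (Rmult_le_reg_r (Rabs (rx - ry) + 1)); [lra|]. unfold Rdiv. rewrite Rmult_assoc, Rinv_l by lra. lra. }
      assert (0 < C * e / 2) by nra. nra. }
    destruct (Hq d Hd0) as [T1 [HT1 HT1']].
    assert (Hg1 : forall t, T1 <= t -> ry - C * e / 2 <= gg t <= ry + C * e / 2).
    { intros t Ht. pose proof (Hgg d t Hd0 ltac:(lra) (HT1' t Ht)). pose proof (Rle_abs (gg t - ry)). pose proof (Rle_abs (-(gg t - ry))). rewrite Rabs_Ropp in H1. lra. }
    destruct (attract lN (fun t => gg t - C * (nx t + ny t)) T1 (ln (L + e)) (C * e / 2)) as [Ta HTa].
    { nra. }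
    { intros t Ht; apply HlN; lra. }
    { intros t Ht Hl. destruct (Hpos t ltac:(lra)) as [p1 p2].
      assert (L + e < nx t + ny t) by (apply ln_lt_inv; [lra|lra|exact Hl]).
      specialize (Hg1 t Ht). nra. }
    destruct (attract (fun t => - lN t) (fun t => - (gg t - C * (nx t + ny t))) T1 (- ln (L - e)) (C * e / 2)) as [Tb HTb].
    { nra. }
    { intros t Ht; apply derivable_pt_lim_opp with (f := lN); apply HlN; lra. }
    { intros t Ht Hl. destruct (Hpos t ltac:(lra)) as [p1 p2].
      assert (nx t + ny t < L - e) by (apply ln_lt_inv; [lra|lra|unfold lN in Hl; lra]).
      specialize (Hg1 t Ht). nra. }
    exists (Rmax T1 (Rmax Ta Tb)). intros t Ht.
    pose proof (Rmax_l T1 (Rmax Ta Tb)). pose proof (Rmax_r T1 (Rmax Ta Tb)).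
    pose proof (Rmax_l Ta Tb). pose proof (Rmax_r Ta Tb).
    destruct (Hpos t ltac:(lra)) as [p1 p2].
    specialize (HTa t ltac:(lra)). specialize (HTb t ltac:(lra)). unfold lN in *.
    split.
    - destruct (Rle_or_lt (L - e) (nx t + ny t)) as [h|h]; [exact h|exfalso].
      pose proof (ln_increasing (nx t + ny t) (L - e) ltac:(lra) h). lra.
    - destruct (Rle_or_lt (nx t + ny t) (L + e)) as [h|h]; [exact h|exfalso].
      pose proof (ln_increasing (L + e) (nx t + ny t) ltac:(lra) h). lra. }
  assert (Hfin : forall eps, 0 < eps -> exists T, forall t, T <= t ->
            Rabs (nx t + ny t - L) < eps / 2 /\ 0 < nx t /\ 0 < ny t /\ nx t < eps / 2).
  { intros eps He.
    set (e := Rmin (eps / 4) (L / 2)).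
    assert (He0 : 0 < e) by (unfold e; apply Rmin_glb_lt; lra).
    assert (He1 : e <= eps / 4) by apply Rmin_l.
    assert (He2 : e <= L / 2) by apply Rmin_r.
    destruct (HN e He0 ltac:(lra)) as [Ta HTa].
    set (d := eps / (8 * L)).
    assert (Hd0 : 0 < d) by (unfold d; apply Rdiv_lt_0_compat; lra).
    destruct (Hq d Hd0) as [Tb [HTb HTb']].
    exists (Rmax Ta Tb). intros t Ht.
    pose proof (Rmax_l Ta Tb). pose proof (Rmax_r Ta Tb).
    destruct (Hpos t ltac:(lra)) as [p1 p2].
    specialize (HTa t ltac:(lra)). specialize (HTb' t ltac:(lra)).
    split; [apply Rabs_def1; lra|split; [lra|split; [lra|]]].
    assert (d * ny t <= d * (2 * L)) by (apply Rmult_le_compat_l; lra).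
    assert (d * (2 * L) = eps / 4) by (unfold d; field; lra).
    lra. }
  split.
  - intros eps He. destruct (Hfin eps He) as [T HT]. exists T. intros t Ht.
    destruct (HT t Ht) as [h1 [h2 [h3 h4]]]. rewrite Rminus_0_r, Rabs_pos_eq by lra. lra.
  - intros eps He. destruct (Hfin eps He) as [T HT]. exists T. intros t Ht.
    destruct (HT t Ht) as [h1 [h2 [h3 h4]]]. apply Rabs_def2 in h1. apply Rabs_def1; lra.
Qed.
Lemma exist_sol rx ry C a u0 v0 : 0 < C -> 0 < u0 -> 0 < v0 ->
  exists nx ny, nx 0 = u0 /\ ny 0 = v0 /\ is_solution (Pf rx C a) (Qf ry C a) nx ny.
Proof.
  intros HC Hu Hv.
  set (S := ry - rx - a). set (k := v0 / u0).
  assert (Hk : 0 < k) by (unfold k; apply Rdiv_lt_0_compat; lra).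
  set (w := fun t => k * exp (S * t)).
  assert (Hw : forall t, 0 < w t) by (intros t; unfold w; pose proof (exp_pos (S*t)); nra).
  assert (Hdw : forall t, derivable_pt_lim w t (S * w t)).
  { intros t. apply is_derive_Reals. unfold w. auto_derive; auto. ring. }
  set (g := fun t => rx + (ry - rx) * (w t / (1 + w t))).
  assert (Hgc : forall t, continuous g t).
  { intros t. apply (@ex_derive_continuous R_AbsRing R_NormedModule). unfold g, w. auto_derive.
    pose proof (Hw t). unfold w in H. lra. }
  destruct (antideriv g Hgc) as [G HG].
  set (G0 := fun t => G t - G 0).
  assert (HG0 : forall t, derivable_pt_lim G0 t (g t)).
  { intros t. unfold G0. eapply dlim_ext; [|apply (derivable_pt_lim_minus G (fun _ => G 0))].
    2: apply is_derive_Reals, HG. 2: apply derivable_pt_lim_const. ring. }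
  set (Ef := fun t => exp (G0 t)).
  assert (HEd : forall t, derivable_pt_lim Ef t (exp (G0 t) * g t)).
  { intros t. apply (derivable_pt_lim_comp G0 exp). apply HG0. apply derivable_pt_lim_exp. }
  assert (HEc : forall t, continuous Ef t).
  { intros t. apply (@ex_derive_continuous R_AbsRing R_NormedModule). exists (exp (G0 t) * g t). apply is_derive_Reals. apply HEd. }
  destruct (antideriv Ef HEc) as [H HH].
  set (H0 := fun t => H t - H 0).
  assert (HH0 : forall t, derivable_pt_lim H0 t (Ef t)).
  { intros t. unfold H0. eapply dlim_ext; [|apply (derivable_pt_lim_minus H (fun _ => H 0))].
    2: apply is_derive_Reals, HH. 2: apply derivable_pt_lim_const. ring. }
  assert (HH0p : forall t, 0 <= t -> 0 <= H0 t).
  { intros t Ht. destruct (Rle_lt_or_eq_dec 0 t Ht) as [h|h].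
    - destruct (MVT_cor2 H0 Ef 0 t h (fun c _ => HH0 c)) as [c [Hc _]].
      assert (H0 0 = 0) by (unfold H0; ring).
      assert (0 < Ef c) by (unfold Ef; apply exp_pos). nra.
    - subst. unfold H0. lra. }
  set (M0 := / (u0 + v0)).
  assert (HM0 : 0 < M0) by (unfold M0; apply Rinv_0_lt_compat; lra).
  set (M := fun t => exp (- G0 t) * (M0 + C * H0 t)).
  assert (HMd : forall t, derivable_pt_lim M t (C - g t * M t)).
  { intros t. unfold M. eapply dlim_ext; [|apply (derivable_pt_lim_mult (fun t => exp (- G0 t)) (fun t => M0 + C * H0 t))].
    3: { apply (derivable_pt_lim_plus (fun _ => M0) (fun t => C * H0 t)). apply derivable_pt_lim_const.
         apply (derivable_pt_lim_scal H0). apply HH0. }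
    2: { apply (derivable_pt_lim_comp (fun t => - G0 t) exp). apply (derivable_pt_lim_opp G0). apply HG0.
         apply derivable_pt_lim_exp. }
    unfold Ef. rewrite exp_Ropp. field. pose proof (exp_pos (G0 t)); lra. }
  assert (HMp : forall t, 0 <= t -> 0 < M t).
  { intros t Ht. unfold M. pose proof (exp_pos (- G0 t)). pose proof (HH0p t Ht).
    apply Rmult_lt_0_compat; nra. }
  set (D := fun t => M t * (1 + w t)).
  assert (HDd : forall t, derivable_pt_lim D t ((C - g t * M t) * (1 + w t) + M t * (S * w t))).
  { intros t. unfold D. apply (derivable_pt_lim_mult M (fun t => 1 + w t)). apply HMd.
    eapply dlim_ext; [|apply (derivable_pt_lim_plus (fun _ => 1) w); [apply derivable_pt_lim_const|apply Hdw]]. ring. }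
  exists (fun t => 1 / D t), (fun t => w t / D t).
  assert (HDp : forall t, 0 <= t -> 0 < D t).
  { intros t Ht. unfold D. pose proof (HMp t Ht). pose proof (Hw t). nra. }
  assert (Hdx : forall t, 0 <= t -> derivable_pt_lim (fun t => 1 / D t) t (Pf rx C a (1 / D t) (w t / D t))).
  { intros t Ht. eapply dlim_ext; [|apply (derivable_pt_lim_div (fun _ => 1) D); [apply derivable_pt_lim_const|apply HDd|pose proof (HDp t Ht); lra]].
    pose proof (HMp t Ht). pose proof (Hw t). unfold Pf, D, g, S, Rsqr. field. repeat split; lra. }
  assert (Hdy : forall t, 0 <= t -> derivable_pt_lim (fun t => w t / D t) t (Qf ry C a (1 / D t) (w t / D t))).
  { intros t Ht. eapply dlim_ext; [|apply (derivable_pt_lim_div w D); [apply Hdw|apply HDd|pose proof (HDp t Ht); lra]].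
    pose proof (HMp t Ht). pose proof (Hw t). unfold Qf, D, g, S, Rsqr. field. repeat split; lra. }
  assert (HMz : M 0 = M0).
  { unfold M, G0, H0. rewrite !Rminus_diag, Ropp_0, exp_0. ring. }
  assert (Hw0 : w 0 = k) by (unfold w; rewrite Rmult_0_r, exp_0; ring).
  split; [|split].
  - unfold D. rewrite HMz, Hw0. unfold M0, k. field. lra.
  - unfold D. rewrite HMz, Hw0. unfold M0, k. field. lra.
  - split.
    + intros t Ht. split; [apply Hdx|apply Hdy]; lra.
    + intros eps He.
      destruct (cont_eps _ 0 (dcont _ _ _ (Hdx 0 (Rle_refl 0))) eps He) as [d1 [Hd1 Hd1']].
      destruct (cont_eps _ 0 (dcont _ _ _ (Hdy 0 (Rle_refl 0))) eps He) as [d2 [Hd2 Hd2']].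
      exists (Rmin d1 d2). split. apply Rmin_glb_lt; auto.
      intros t Ht. pose proof (Rmin_l d1 d2). pose proof (Rmin_r d1 d2).
      split; [apply Hd1'|apply Hd2']; rewrite Rminus_0_r, Rabs_pos_eq; lra.
Qed.

Lemma swap_sol rx ry C a nx ny : is_solution (Pf rx C a) (Qf ry C a) nx ny ->
  is_solution (Pf ry C (-a)) (Qf rx C (-a)) ny nx.
Proof.
  assert (E1 : forall u v, Pf ry C (-a) v u = Qf ry C a u v).
  { intros u v. unfold Pf, Qf. rewrite (Rplus_comm v u). unfold Rdiv. ring. }
  assert (E2 : forall u v, Qf rx C (-a) v u = Pf rx C a u v).
  { intros u v. unfold Pf, Qf. rewrite (Rplus_comm v u). unfold Rdiv. ring. }
  intros [Hd Hc]. split.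
  - intros t Ht. rewrite E1, E2. destruct (Hd t Ht); split; auto.
  - intros e He. destruct (Hc e He) as [d [Hd0 Hd1]]. exists d. split; auto.
    intros t Ht. destruct (Hd1 t Ht); split; auto.
Qed.

Theorem mainTheorem9 (rx ry C txy tyx : R)
  (hrx : 0 < rx) (hry : 0 < ry) (hC : 0 < C)
  (htxy : 0 <= txy) (htyx : 0 <= tyx) :
  let P := Pf rx C (alpha txy tyx) in
  let Q := Qf ry C (alpha txy tyx) in
  let S := S_gen ry rx C C (alpha tyx txy) 0 1 in
  (* S(y;x) reduces to r(y) - r(x) + alpha(y,x) = - S(x;y) *)
  (S = ry - rx + alpha tyx txy /\ S = - S_gen rx ry C C (alpha txy tyx) 0 1) /\
  (* no interior fixed point (when S(y;x) <> 0) *)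
  (S <> 0 -> forall u v, 0 < u -> 0 < v -> ~ (P u v = 0 /\ Q u v = 0)) /\
  (* every positive initial condition has a global solution *)
  (forall u0 v0, 0 < u0 -> 0 < v0 ->
     exists nx ny, nx 0 = u0 /\ ny 0 = v0 /\ is_solution P Q nx ny) /\
  (* every solution from a positive initial condition converges *)
  (forall nx ny, is_solution P Q nx ny -> 0 < nx 0 -> 0 < ny 0 ->
     (0 < S -> conv_infty nx 0 /\ conv_infty ny (ry / C)) /\
     (S < 0 -> conv_infty nx (rx / C) /\ conv_infty ny 0)).
Proof.
  intros P Q S.
  assert (HSv : S = ry - rx - alpha txy tyx).
  { unfold S, S_gen, alpha. field. lra. }
  split; [|split; [|split]].
  - split.
    + rewrite HSv. unfold alpha. ring.
    + rewrite HSv. unfold S_gen, alpha. field. lra.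
  - intros HS u v Hu Hv [HP HQ]. apply HS. rewrite HSv.
    unfold P, Q, Pf, Qf in *. set (a := alpha txy tyx) in *.
    apply Rmult_integral in HP. apply Rmult_integral in HQ.
    destruct HP as [HP|HP]; [|lra]. destruct HQ as [HQ|HQ]; [|lra].
    assert (a / (u + v) * v + a / (u + v) * u = a) by (field; lra). lra.
  - intros u0 v0 Hu Hv. apply exist_sol; auto.
  - intros nx ny Hsol H0x H0y. split; intros HS.
    + apply (core rx ry C (alpha txy tyx)); auto. lra.
    + destruct (core ry rx C (- alpha txy tyx) ny nx) as [h1 h2]; auto. lra.
      apply swap_sol. exact Hsol.
Qed.
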